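(* Let $A$ be a finite alphabet, $x\in A^{\mathcal{T}}$ a configuration, and let $y\in (A\times A)^{\mathcal{T}}$ be a dyadic encoding of $x$. Let $n\ge 0$, let $p:\mathbb{U}_n\to A$ be a pattern, and let $\widetilde{p}$ be the set of all maps $\mathbb{L}_n\to A$ of the form $h\mapsto \pi_2(y')_h$, where $y'$ ranges over dyadic encodings of configurations $x'$ with $x'_h=p_h$ for all $h\in\mathbb{U}_n$. Then for every tile $g$: the pattern $p$ appears in $x$ at position $g$ (i.e. $x_{g\cdot h}=p_h$ for all $h\in\mathbb{U}_n$) if and only if the map $h\mapsto \pi_2(y)_{g\cdot h}$, $h\in\mathbb{L}_n$, belongs to $\widetilde{p}$.
   Context: A $2$-fold horocyclic tessellation $\mathcal{T}$ of $\mathbb{H}^2$ (upper half-plane model) is a tiling arranged in horizontal rows; each row is a bi-infinite sequence of tiles, each tile sits above exactly two tiles of the row immediately below (its bottom-left and bottom-right children), and the row below consists exactly of the children of the tiles of the row above, in the induced order. One such tessellation is fixed. Tiles are named by words over $\{\alpha,\alpha^{-1},\beta,\beta^{-1}\}$: a fixed tile is $\varepsilon$; if a tile is $g$, then $g\cdot\beta$ is its right neighbour in its row, $g\cdot\alpha$ its bottom-left child and $g\cdot\alpha\cdot\beta$ its bottom-right child, with $\alpha\alpha^{-1}=\beta\beta^{-1}=\varepsilon$ and $\alpha\beta^2=\beta\alpha$. Configurations are maps $\mathcal{T}\to A$. Supports: $\mathbb{U}_n=\{\alpha^k\beta^q: 0\le k\le n-1,\ 0\le q\le 2^k-1\}$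 and $\mathbb{L}_n=\{\alpha^{n+1}\beta^q: 0\le q\le 2^{n+1}-1\}$; a pattern of size $n$ is a map $\mathbb{U}_n\to A$. For $z\in(A\times A)^{\mathcal{T}}$, $\pi_1(z),\pi_2(z)\in A^{\mathcal{T}}$ denote its first and second coordinates. A dyadic encoding of $x\in A^{\mathcal{T}}$ is a configuration $y\in(A\times A)^{\mathcal{T}}$ such that $\pi_1(y)=x$ and, for every tile $g$, $\pi_2(y)_{g\alpha}=x_g$ and $\pi_2(y)_{g\alpha\beta}=\pi_2(y)_g$ (it is unique unless the tessellation has a vertical fracture line, in which case one undetermined symbol propagates along it). *)

(* Defs.v *)
From Stdlib Require Import ZArith.
From mathcomp Require Import all_boot.

(* A 2-fold horocyclic tessellation, combinatorially.
   Rows are indexed by a level l : Z (increasing downwards), tiles in a row by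
   a position i : Z (increasing to the right).  Since each row below consists
   exactly of the children of the row above, in the induced order, and each
   tile has exactly two (consecutive) children, there is an offset s l : Z such
   that the children of tile (l,i) are (l+1, 2i + s l) (bottom-left) and
   (l+1, 2i + s l + 1) (bottom-right).  Every tessellation is thus described
   (up to isomorphism) by some s : Z -> Z, with the distinguished tile
   epsilon placed at (0,0). *)
Definition tile : Type := (Z * Z)%type.

Definition eps : tile := (0%Z, 0%Z).

Definition beta (g : tile) : tile := (fst g, (snd g + 1)%Z).

Definition alpha (s : Z -> Z) (g : tile) : tile :=
  ((fst g + 1)%Z, (2 * snd g + s (fst g))%Z).

(* g . (alpha^k beta^q) *)
Definition act (s : Z -> Z) (g : tile) (k q : nat) : tile :=
  Nat.iter q beta (Nat.iter k (alpha s) g).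

(* alpha^k beta^q is in U_n *)
Definition inU (n k q : nat) : Prop := (k < n)%coq_nat /\ (q < 2 ^ k)%coq_nat.

(* alpha^(n+1) beta^q is in L_n *)
Definition inL (n q : nat) : Prop := (q < 2 ^ (n + 1))%coq_nat.

Definition dyadic_encoding {A : Type} (s : Z -> Z) (x : tile -> A)
    (y : tile -> (A * A)%type) : Prop :=
  (forall g, fst (y g) = x g) /\
  (forall g, snd (y (alpha s g)) = x g) /\
  (forall g, snd (y (beta (alpha s g))) = snd (y g)).

(* A pattern of size n: only its values on U_n matter. *)
Definition appears {A : Type} (s : Z -> Z) (n : nat) (p : nat -> nat -> A)
    (x : tile -> A) (g : tile) : Prop :=
  forall k q, inU n k q -> x (act s g k q) = p k q.

Definition in_ptilde {A : Type} (s : Z -> Z) (n : nat) (p : nat -> nat -> A)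
    (f : nat -> A) : Prop :=
  exists (x' : tile -> A) (y' : tile -> (A * A)%type),
    dyadic_encoding s x' y' /\ appears s n p x' eps /\
    (forall q, inL n q -> snd (y' (act s eps (n + 1) q)) = f q).

(* Main.v *)
Require Import Defs.
From Stdlib Require Import ZArith Lia.
From mathcomp Require Import all_boot.
From mathcomp Require Import zify.

Lemma alpha_beta s h : alpha s (beta h) = beta (beta (alpha s h)).
Proof. destruct h as [a b]; unfold alpha, beta; cbn [fst snd]; f_equal; lia. Qed.

Lemma alpha_iter_beta s h q :
  alpha s (Nat.iter q beta h) = Nat.iter (Nat.mul 2 q) beta (alpha s h).
Proof.
  induction q as [|q IH]; [reflexivity|].
  replace (Nat.mul 2 (S q)) with (S (S (Nat.mul 2 q))) by lia.
  simpl. rewrite alpha_beta IH. reflexivity.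
Qed.

Lemma act_alpha s g m r : alpha s (act s g m r) = act s g (S m) (Nat.mul 2 r).
Proof. unfold act. rewrite alpha_iter_beta. reflexivity. Qed.

Lemma act_beta s g m r : beta (act s g m r) = act s g m (S r).
Proof. reflexivity. Qed.

Definition pos s (m : nat) : Z := snd (Nat.iter m (alpha s) eps).

Lemma iter_fst s m : fst (Nat.iter m (alpha s) eps) = Z.of_nat m.
Proof. induction m as [|m IH]; [reflexivity|]. simpl. rewrite IH. lia. Qed.

Lemma pos_S s m : pos s (S m) = (2 * pos s m + s (Z.of_nat m))%Z.
Proof. unfold pos. simpl. rewrite iter_fst. reflexivity. Qed.

Lemma act_eps s m r : act s eps m r = (Z.of_nat m, (pos s m + Z.of_nat r)%Z).
Proof.
  unfold act. induction r as [|r IH].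
  - simpl. rewrite -(iter_fst s m). unfold pos. destruct (Nat.iter m (alpha s) eps); simpl; f_equal; lia.
  - simpl. rewrite IH. unfold beta; simpl. f_equal; lia.
Qed.

Section Fwd.
Variables (s : Z -> Z) (A : Type) (c0 : A) (v : nat -> Z -> A).

Fixpoint zrow (m : nat) (j : Z) : A :=
  match m with
  | O => c0
  | S m' => let d := (j - s (Z.of_nat m'))%Z in
            if Z.even d then v m' (Z.div d 2) else zrow m' (Z.div d 2)
  end.

Definition zt (t : tile) : A := zrow (Z.to_nat (fst t)) (snd t).

Lemma zt_rc h : zt (beta (alpha s h)) = zt h.
Proof.
  destruct h as [l i]. unfold zt, beta, alpha; cbn [fst snd].
  destruct (Z_lt_le_dec l 0) as [Hl|Hl].
  - replace (Z.to_nat l) with 0%nat by lia.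
    replace (Z.to_nat (l+1)) with 0%nat by lia. reflexivity.
  - replace (Z.to_nat (l+1)) with (S (Z.to_nat l)) by lia. cbn [zrow].
    rewrite Z2Nat.id; [|lia].
    replace (2 * i + s l + 1 - s l)%Z with (1 + 2 * i)%Z by lia.
    rewrite Z.even_add_mul_2. change (Z.even 1) with false; cbv iota.
    f_equal. symmetry. apply Z.div_unique with 1%Z; lia.
Qed.
End Fwd.

Lemma even_chain {A : Type} s (x : tile -> A) y g :
  dyadic_encoding s x y ->
  forall j m r, snd (y (act s g (m + j)%coq_nat (Nat.sub (Nat.mul (Nat.pow 2 j) (S r)) 1)))
                = snd (y (act s g m r)).
Proof.
  move=> [H1 [H2 H3]]. induction j as [|j IH]; intros m r.
  - replace (m + 0)%coq_nat with m by lia.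
    replace (Nat.sub (Nat.mul (Nat.pow 2 0) (S r)) 1) with r by (simpl; lia).
    reflexivity.
  - replace (m + S j)%coq_nat with (S (m + j)%coq_nat) by lia.
    set r' := Nat.sub (Nat.mul (Nat.pow 2 j) (S r)) 1.
    have Hp : (0 < (Nat.pow 2 j))%coq_nat by (apply Nat.neq_0_lt_0, Nat.pow_nonzero; lia).
    replace (Nat.sub (Nat.mul (Nat.pow 2 (S j)) (S r)) 1) with (S (Nat.mul 2 r')).
    2:{ rewrite Nat.pow_succ_r'. subst r'. nia. }
    rewrite -act_beta -act_alpha H3. apply IH.
Qed.

Lemma expn_pow a b : expn a b = Nat.pow a b.
Proof. induction b as [|b IH]; [reflexivity|]. rewrite expnS IH. reflexivity. Qed.

Lemma fwd s (A : Type) (x : tile -> A) (y : tile -> (A * A)%type) g :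
  dyadic_encoding s x y ->
  forall m r, (r < Nat.pow 2 m)%coq_nat ->
  zt s A (snd (y g)) (fun m i => x (act s g m (Z.to_nat (i - pos s m)))) (act s eps m r)
  = snd (y (act s g m r)).
Proof.
  move=> [H1 [H2 H3]]. induction m as [|m IH]; intros r Hr.
  - simpl in Hr. replace r with 0%nat by lia. reflexivity.
  - rewrite act_eps. unfold zt; cbn [fst snd]. rewrite Nat2Z.id. cbn [zrow].
    rewrite pos_S. rewrite Nat.pow_succ_r' in Hr.
    destruct (Nat.Even_or_Odd r) as [[r' ->]|[r' ->]].
    + replace (2 * pos s m + s (Z.of_nat m) + Z.of_nat (Nat.mul 2 r') - s (Z.of_nat m))%Z
        with (0 + 2 * (pos s m + Z.of_nat r'))%Z by lia.
      rewrite Z.even_add_mul_2. change (Z.even 0) with true. cbv iota.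
      replace ((0 + 2 * (pos s m + Z.of_nat r')) / 2)%Z with (pos s m + Z.of_nat r')%Z
        by (apply Z.div_unique with 0%Z; lia).
      replace (Z.to_nat (pos s m + Z.of_nat r' - pos s m)) with r' by lia.
      rewrite -act_alpha H2. reflexivity.
    + replace (2 * pos s m + s (Z.of_nat m) + Z.of_nat (Nat.add (Nat.mul 2 r') 1) - s (Z.of_nat m))%Z
        with (1 + 2 * (pos s m + Z.of_nat r'))%Z by lia.
      rewrite Z.even_add_mul_2. change (Z.even 1) with false. cbv iota.
      replace ((1 + 2 * (pos s m + Z.of_nat r')) / 2)%Z with (pos s m + Z.of_nat r')%Z
        by (apply Z.div_unique with 1%Z; lia).
      have := IH r' ltac:(lia). rewrite act_eps. unfold zt; cbn [fst snd]. rewrite Nat2Z.id.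
      move=> ->.
      replace (Nat.add (Nat.mul 2 r') 1) with (S (Nat.mul 2 r')) by lia.
      rewrite -act_beta -act_alpha H3. reflexivity.
Qed.

Theorem proposition1 (s : Z -> Z) (A : finType) (x : tile -> A)
    (y : tile -> (A * A)%type) (n : nat) (p : nat -> nat -> A) (g : tile) :
  dyadic_encoding s x y ->
  (appears s n p x g <->
   in_ptilde s n p (fun q => snd (y (act s g (n + 1) q)))).
Proof.
  intros Hd.
  set c0 := snd (y g).
  set v := fun m i => x (act s g m (Z.to_nat (i - pos s m))).
  have Fw := fwd s A x y g Hd.
  split.
  - intros Happ.
    exists (fun h => zt s A c0 v (alpha s h)), (fun h => (zt s A c0 v (alpha s h), zt s A c0 v h)).
    split; [split; [|split]|split].
    + reflexivity.
    + reflexivity.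
    + intros h. cbn [snd]. apply zt_rc.
    + intros k q [Hk Hq]. rewrite act_eps. unfold alpha, zt; cbn [fst snd].
      replace (Z.to_nat (Z.of_nat k + 1)) with (S k) by lia. cbn [zrow].
      replace (2 * (pos s k + Z.of_nat q) + s (Z.of_nat k) - s (Z.of_nat k))%Z
        with (0 + 2 * (pos s k + Z.of_nat q))%Z by lia.
      rewrite Z.even_add_mul_2. change (Z.even 0) with true. cbv iota.
      replace ((0 + 2 * (pos s k + Z.of_nat q)) / 2)%Z with (pos s k + Z.of_nat q)%Z
        by (apply Z.div_unique with 0%Z; lia).
      subst v; cbv beta.
      replace (Z.to_nat (pos s k + Z.of_nat q - pos s k)) with q by lia.
      apply Happ; split; assumption.
    + intros q Hq. cbn [snd]. apply Fw. unfold inL in Hq. rewrite expn_pow in Hq. exact Hq.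
  - intros [x' [y' [Hd' [Happ' Hf]]]] k q [Hk Hq]. rewrite expn_pow in Hq.
    set R := Nat.sub (Nat.mul (Nat.pow 2 (Nat.sub n k)) (S (Nat.mul 2 q))) 1.
    have E : forall (xx : tile -> A) yy h, dyadic_encoding s xx yy ->
        xx (act s h k q) = snd (yy (act s h (n+1) R)).
    { intros xx yy h H. have H' := H. destruct H' as [_ [H2 _]].
      rewrite -H2 act_alpha. rewrite -(even_chain s xx yy h H (Nat.sub n k) (S k) (Nat.mul 2 q)).
      replace (Nat.add (S k) (Nat.sub n k)) with (n+1) by lia. reflexivity. }
    have HR : inL n R.
    { unfold inL. rewrite expn_pow. subst R.
      have P : (0 < Nat.pow 2 (Nat.sub n k))%coq_nat.
      { apply Nat.neq_0_lt_0, Nat.pow_nonzero; lia. }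
      replace (Nat.pow 2 (n + 1)) with (Nat.mul (Nat.pow 2 (Nat.sub n k)) (Nat.mul 2 (Nat.pow 2 k))).
      2:{ rewrite -Nat.pow_succ_r' -Nat.pow_add_r. f_equal. lia. }
      nia. }
    rewrite (E x y g Hd) -(Hf R HR) -(E x' y' eps Hd').
    apply Happ'. split; [exact Hk | rewrite expn_pow; exact Hq].
Qed.
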